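(* Let $p,q$ be nonnegative integers and let $x,z$ be arbitrary complex numbers. Then $$\binom{2x+z-q}{p}\binom{x}{q}=\sum_{i=0}^{p+q}\beta_i(p,q,z)\binom{2x+z}{i},$$ where $$\beta_i(p,q,z)=\frac{1}{2^{2q}}\sum_{b=\max(0,i-p)}^{q}2^b\binom{2q-b}{q}\sum_{a=0}^{b}\binom{p+b-q-z}{a}\binom{q+z}{b-a}\binom{a-q}{p+b-i}.$$
   Context: For complex $y$ and integer $n\ge0$, $\binom{y}{n}=y(y-1)\cdots(y-n+1)/n!$. *)

(* Defs.v *)
From HB Require Import structures.
From mathcomp Require Import all_boot all_order all_algebra.
From mathcomp Require Import complex.
From mathcomp Require Import Rstruct.
From Stdlib Require Import Rdefinitions.
Set Implicit Arguments. Unset Strict Implicit. Unset Printing Implicit Defensive.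
Import Order.TTheory GRing.Theory Num.Theory.
Local Open Scope ring_scope.

Notation CC := (complex Rdefinitions.R).

Definition binomC (F : fieldType) (y : F) (n : nat) : F :=
  (\prod_(k < n) (y - k%:R)) / (n`!)%:R.

Definition beta (i p q : nat) (z : CC) : CC :=
  ((2%:R ^+ (2 * q))^-1) *
  \sum_(maxn 0 (i - p) <= b < q.+1)
     (2%:R ^+ b * binomC ((2 * q)%:R - b%:R) q *
      \sum_(0 <= a < b.+1)
        (binomC (p%:R + b%:R - q%:R - z) a * binomC (q%:R + z) (b - a)
         * binomC (a%:R - q%:R) (p + b - i))).

(* Main.v *)
Require Import Defs.
From mathcomp Require Import all_boot all_order all_algebra.
From mathcomp Require Import complex Rstruct.
From mathcomp Require Import ring lra zify.
Import Order.TTheory GRing.Theory Num.Theory.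
Local Open Scope ring_scope.

Section B.
Variable F : numFieldType.
Implicit Types (u v y : F).

Lemma natr_neq0 n : (n.+1%:R : F) != 0.
Proof. by rewrite pnatr_eq0. Qed.
Lemma fact_neq0 n : ((n`!)%:R : F) != 0.
Proof. by rewrite pnatr_eq0 -lt0n fact_gt0. Qed.

Lemma bC0 y : binomC y 0 = 1.
Proof. by rewrite /binomC big_ord0 fact0 divr1. Qed.

Lemma bCS y n : binomC y n.+1 = binomC y n * (y - n%:R) / n.+1%:R.
Proof.
rewrite /binomC big_ord_recr /= factS natrM invfM.
have h1 := natr_neq0 n; have h2 := fact_neq0 n; field; by rewrite nat1r h1 h2.
Qed.

Lemma bC_absorb y n : n.+1%:R * binomC y n.+1 = y * binomC (y - 1) n.
Proof.
rewrite /binomC big_ord_recl /= subr0 factS natrM invfM.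
have e : \prod_(i < n) (y - (bump 0 i)%:R) = \prod_(i < n) (y - 1 - i%:R).
  by apply: eq_bigr => i _; rewrite /bump /= add1n -addn1 natrD opprD addrA addrAC.
rewrite e.
have := natr_neq0 n => h.
field; by rewrite nat1r h fact_neq0.
Qed.

Lemma bC_nat n k : binomC (n%:R : F) k = ('C(n,k))%:R.
Proof.
elim: k => [|k IH]; first by rewrite bC0 bin0.
rewrite bCS IH. have h := natr_neq0 k.
apply: (mulIf h). rewrite mulfVK // -natrM mulnC mul_bin_left.
case: (leqP k n) => hk.
  by rewrite natrM natrB // mulrC.
by rewrite bin_small // mul0r muln0.
Qed.

Lemma bC_shift (U : F) p r : binomC U (p + r) * ('C(p + r, p))%:R =
  binomC U p * binomC (U - p%:R) r.
Proof.
rewrite /binomC big_split_ord /=.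
have e : \prod_(i < r) (U - (rshift p i)%:R) = \prod_(i < r) (U - p%:R - i%:R).
  by apply: eq_bigr => i _; rewrite /= natrD opprD addrA.
rewrite e.
have := bin_fact (leq_addr r p); rewrite addKn => hf.
rewrite -hf !natrM.
have h1 := fact_neq0 p; have h2 := fact_neq0 r.
have h3 : ('C(p + r, p)%:R : F) != 0 by rewrite pnatr_eq0 -lt0n bin_gt0 leq_addr.
field. by rewrite h1 h2 h3.
Qed.

Lemma vandermonde n (u v : F) :
  \sum_(0 <= i < n.+1) binomC u i * binomC v (n - i) = binomC (u + v) n.
Proof.
elim: n u v => [|n IH] u v.
  by rewrite big_nat1 !bC0 mulr1.
apply: (mulfI (natr_neq0 n)). rewrite bC_absorb mulr_sumr.
have e : forall i, (0 <= i < n.+2)%N -> n.+1%:R * (binomC u i * binomC v (n.+1 - i))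
   = (i%:R * binomC u i) * binomC v (n.+1 - i) +
     binomC u i * ((n.+1 - i)%:R * binomC v (n.+1 - i)).
  move=> i /andP[_ hi].
  have -> : (n.+1%:R : F) = i%:R + (n.+1 - i)%:R by rewrite -natrD subnKC.
  ring.
rewrite (eq_big_nat _ _ e) big_split /=.
rewrite big_nat_recl // mul0r mul0r add0r.
rewrite [X in _ + X]big_nat_recr //= subnn mul0r mulr0 addr0.
have e1 : forall i, (0 <= i < n.+1)%N -> i.+1%:R * binomC u i.+1 * binomC v (n.+1 - i.+1)
   = u * (binomC (u - 1) i * binomC v (n - i)).
  by move=> i _; rewrite bC_absorb subSS /binomC !mulrA.
have e2 : forall i, (0 <= i < n.+1)%N -> binomC u i * ((n.+1 - i)%:R * binomC v (n.+1 - i))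
   = v * (binomC u i * binomC (v - 1) (n - i)).
  move=> i /andP[_ hi]; have hi2 : (i <= n)%N by exact: hi.
  rewrite (subSn hi2) bC_absorb.
  by rewrite mulrCA.
rewrite (eq_big_nat _ _ e1) (eq_big_nat _ _ e2) -!mulr_sumr !IH.
by rewrite (addrAC u) mulrDl addrA.
Qed.

Lemma natid q b : (b <= q.+1)%N ->
  (q.+1 * 'C((q.+1).*2 - b, q.+1) =
   2 * ((q.*2).+1 - b) * 'C(q.*2 - b, q) + b * 'C((q.*2).+1 - b, q))%N.
Proof.
move=> hb.
set n := ((q.*2).+1 - b)%N.
have e1 : ((q.+1).*2 - b = n.+1)%N by rewrite /n doubleS subSn // -ltnS; apply: (leq_trans hb); rewrite ltnS -addnn leq_addr.
have e2 : (q.*2 - b = n.-1)%N by rewrite /n subSKn.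
rewrite e1 e2 -mul_bin_diag /= -mulnA mul_bin_down mulnA -mulnDl; congr (_ * _)%N.
rewrite /n -addnn in hb *; lia.
Qed.

Lemma outer q (x : F) :
  \sum_(0 <= b < q.+1) (2 ^ b * 'C(q.*2 - b, q))%:R * binomC (2%:R * x - (q.*2)%:R + b%:R) b
  = (2 ^ (q.*2))%:R * binomC x q.
Proof.
elim: q x => [|q IH] x.
  by rewrite big_nat1 /= !bC0 mulr1.
apply: (mulfI (natr_neq0 q)).
rewrite mulrCA bC_absorb.
set m := 2%:R * x - (q.+1.*2)%:R.
have hm : 2%:R * (x - 1) - (q.*2)%:R = m.
  have h2 : ((q.*2).+2%:R : F) = (q.*2)%:R + 2 by rewrite -[(q.*2).+2]addn2 natrD.
  rewrite /m doubleS h2; ring.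
have hx : (2 ^ (q.+1.*2))%:R * (x * binomC (x - 1) q) =
    2%:R * (m + (q.+1.*2)%:R) * ((2 ^ (q.*2))%:R * binomC (x - 1) q).
  have h2 : ((q.*2).+2%:R : F) = (q.*2)%:R + 2 by rewrite -[(q.*2).+2]addn2 natrD.
  rewrite /m doubleS h2 !expnS !natrM; move: ((2 ^ q.*2)%:R : F) ((q.*2)%:R : F) => a c; ring.
rewrite hx -(IH (x - 1)) hm.
pose B b := binomC (m + b%:R) b.
pose T1 b := (2 ^ b.+1 * ((q.*2).+1 - b) * 'C(q.*2 - b, q))%:R * B b.
pose T2 b := (2 ^ b * b * 'C((q.*2).+1 - b, q))%:R * B b.
have eL : forall b, (0 <= b < q.+2)%N ->
  q.+1%:R * ((2 ^ b * 'C(q.+1.*2 - b, q.+1))%:R * binomC (m + b%:R) b) = T1 b + T2 b.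
  move=> b /andP[_ hb]; rewrite /T1 /T2 /B mulrA -natrM mulnCA natid //.
  by rewrite mulnDr !mulnA expnSr natrD mulrDl.
rewrite mulr_sumr (eq_big_nat _ _ eL) big_split /=.
rewrite big_nat_recr //= {2}/T1.
have z : (((q.*2).+1 - q.+1) * 'C(q.*2 - q.+1, q) = 0)%N.
  case: q {IH hm hx eL m T1 T2 B} => [//|q]; rewrite bin_small ?muln0 //; rewrite -addnn; lia.
rewrite -mulnA z muln0 mul0r addr0.
rewrite [X in _ + X]big_nat_recl //.
have -> : T2 0%N = 0 by rewrite /T2 muln0 mul0r.
rewrite add0r.
rewrite -big_split /= !mulr_sumr.
apply: eq_big_nat => b /andP[_ hb].
rewrite /T1 /T2 /B subSS.
have hb' : (b <= (q.*2).+1)%N by rewrite -addnn; lia.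
have ab : b.+1%:R * binomC (m + b.+1%:R) b.+1 = (m + b%:R + 1) * binomC (m + b%:R) b.
  by have := bC_absorb (m + b.+1%:R) b; rewrite -natr1 addrA addrK.
have e : (2 ^ b.+1 * b.+1 * 'C(q.*2 - b, q))%:R * binomC (m + b.+1%:R) b.+1
   = (2 ^ b.+1 * 'C(q.*2 - b, q))%:R * (b.+1%:R * binomC (m + b.+1%:R) b.+1).
  by rewrite !natrM; ring.
rewrite e ab.
have h2 : ((q.+1.*2)%:R : F) = (q.*2)%:R + 2 by rewrite doubleS -[(q.*2).+2]addn2 natrD.
have h1 : (((q.*2).+1 - b)%:R : F) = (q.*2)%:R + 1 - b%:R by rewrite natrB // -natr1.
rewrite expnS !natrM h2 h1.
move: (binomC (m + b%:R) b) ((2 ^ b)%:R : F) ('C(q.*2 - b, q)%:R : F) ((q.*2)%:R : F) (b%:R : F) => w1 w2 w3 w4 w5.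
ring.
Qed.

Lemma inner_K (A B : F) b j : (j <= b)%N ->
  \sum_(0 <= a < b.+1) binomC A a * binomC B (b - a) * ('C(a, j))%:R
  = binomC A j * binomC (A - j%:R + B) (b - j).
Proof.
move=> hj.
rewrite (@big_cat_nat _ _ _ j) //=; last by rewrite ltnW.
rewrite big1_seq ?add0r; last first.
  move=> a; rewrite mem_index_iota => /andP[_ ha].
  by rewrite bin_small // mulr0.
rewrite -{1}[j]add0n big_addn subSn //.
rewrite -vandermonde mulr_sumr.
apply: eq_big_nat => a _.
rewrite (addnC a j) mulrAC bC_shift subnDA; by rewrite mulrA.
Qed.

Lemma inner (A B U : F) p b : A + B = (p + b)%:R ->
  \sum_(0 <= a < b.+1) binomC A a * binomC B (b - a) * binomC (U + a%:R) (p + b)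
  = binomC U p * binomC (U - p%:R + A) b.
Proof.
move=> hAB.
have e1 : forall a, (0 <= a < b.+1)%N -> binomC A a * binomC B (b - a) * binomC (U + a%:R) (p + b)
   = \sum_(0 <= j < (p + b).+1) binomC A a * binomC B (b - a) * ('C(a, j)%:R * binomC U (p + b - j)).
  move=> a _; rewrite addrC -vandermonde mulr_sumr; apply: eq_big_nat => j _; by rewrite bC_nat.
rewrite (eq_big_nat _ _ e1) exchange_big_nat /=.
rewrite (@big_cat_nat _ _ _ b.+1) //=; last by rewrite ltnS leq_addl.
rewrite [X in _ + X]big1_seq ?addr0; last first.
  move=> j /andP[_]; rewrite mem_index_iota => /andP[hj _]; apply: big1_seq => a.
  move=> /andP[_]; rewrite mem_index_iota => /andP[_ ha]; rewrite bin_small ?mul0r ?mulr0 //.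
  exact: leq_trans ha hj.
have e2 : forall j, (0 <= j < b.+1)%N ->
  \sum_(0 <= a < b.+1) binomC A a * binomC B (b - a) * ('C(a, j)%:R * binomC U (p + b - j))
  = binomC U p * (binomC A j * binomC (U - p%:R) (b - j)).
  move=> j /andP[_ hj].
  under eq_big_nat => a _ do rewrite mulrA.
  rewrite -mulr_suml inner_K //.
  have hjn : (j <= p + b)%N by lia.
  have -> : A - j%:R + B = (p + b - j)%:R by rewrite addrAC hAB natrB.
  rewrite bC_nat -addnBA //.
  have := bin_sub (leq_addr (b - j) p); rewrite addKn => ->.
  by rewrite -mulrA (mulrC ('C(_, _)%:R)) bC_shift mulrCA.
rewrite (eq_big_nat _ _ e2) -mulr_sumr vandermonde.
by rewrite addrC.
Qed.
End B.

Theorem lemma2p5 (p q : nat) (x z : CC) :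
  binomC (2%:R * x + z - q%:R) p * binomC x q =
  \sum_(0 <= i < (p + q).+1) beta i p q z * binomC (2%:R * x + z) i.
Proof.
set y := 2%:R * x + z.
rewrite /beta.
set c := (2%:R ^+ (2 * q))^-1.
under eq_big_nat => i _ do rewrite -mulrA mulr_suml max0n (@big_nat_widenl _ _ _ _ 0) // big_mkcond /=.
rewrite -mulr_sumr exchange_big_nat /=.
have e : forall b, (0 <= b < q.+1)%N ->
  \sum_(0 <= i < (p + q).+1)
     (if (i - p <= b)%N then
        2%:R ^+ b * binomC ((2 * q)%:R - b%:R) q *
        (\sum_(0 <= a < b.+1)
          binomC (p%:R + b%:R - q%:R - z) a * binomC (q%:R + z) (b - a) *
          binomC (a%:R - q%:R) (p + b - i)) * binomC y i
      else 0)
  = (2 ^ b * 'C(q.*2 - b, q))%:R *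
     (binomC (y - q%:R) p * binomC (2%:R * x - (q.*2)%:R + b%:R) b).
  move=> b /andP[_ hb].
  rewrite (@big_cat_nat _ _ _ (p + b).+1) //=; last by rewrite ltnS leq_add2l.
  rewrite [X in _ + X]big1_seq ?addr0; last first.
    move=> i /andP[_]; rewrite mem_index_iota => /andP[hi _].
    rewrite ifF //; apply/negbTE; rewrite -ltnNge; lia.
  have e3 : forall i, (0 <= i < (p + b).+1)%N ->
     (if (i - p <= b)%N then
        2%:R ^+ b * binomC ((2 * q)%:R - b%:R) q *
        (\sum_(0 <= a < b.+1)
          binomC (p%:R + b%:R - q%:R - z) a * binomC (q%:R + z) (b - a) *
          binomC (a%:R - q%:R) (p + b - i)) * binomC y i
      else 0)
     = (2 ^ b * 'C(q.*2 - b, q))%:R * \sum_(0 <= a < b.+1)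
          (binomC (p%:R + b%:R - q%:R - z) a * binomC (q%:R + z) (b - a) *
          (binomC y i * binomC (a%:R - q%:R) (p + b - i))).
    move=> i /andP[_ hi]; rewrite ifT; last by lia.
    have hq : (b <= q * 2)%N by lia.
    have hW : 2%:R ^+ b * binomC ((2 * q)%:R - b%:R) q = (2 ^ b * 'C(q.*2 - b, q))%:R :> CC.
      rewrite mul2n natrM natrX -bC_nat natrB //; lia.
    rewrite -mulrA mulr_suml hW; congr (_ * _).
    by apply: eq_big_nat => a _; rewrite -mulrA (mulrC (binomC y i)).
  rewrite (eq_big_nat _ _ e3) -mulr_sumr exchange_big_nat /=; congr (_ * _).
  under eq_big_nat => a _ do rewrite -mulr_sumr vandermonde.
  have e4 : forall a, (0 <= a < b.+1)%N -> y + (a%:R - q%:R) = (y - q%:R) + a%:R.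
    by move=> a _; rewrite addrCA addrC.
  under eq_big_nat => a ha do rewrite e4 //.
  rewrite inner; last first.
    rewrite natrD; ring.
  congr (_ * binomC _ _).
  rewrite /y -addnn !natrD; ring.
rewrite (eq_big_nat _ _ e).
under eq_big_nat => b _ do rewrite mulrCA.
rewrite -mulr_sumr outer natrX -mul2n /c.
have h : (2%:R ^+ (2 * q) : CC) != 0 by rewrite expf_neq0 // pnatr_eq0.
move: (binomC (y - q%:R) p) (binomC x q) => u1 u2. by field.

Qed.
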